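(* Let $\lambda\in\mathbb{R}$, let $n$ be a positive integer and let $k$ be a positive integer. Then \[ S_{k,\lambda}(n)=\frac{n\,(n+1)_{k,\lambda}}{k+1}-\frac{1}{k+1}\sum_{r=1}^{k-1}(1)_{k+1-r,\lambda}\binom{k}{r-1}S_{r,\lambda}(n)-\frac{\lambda}{k+1}\sum_{r=1}^{k-1}r\binom{k}{r}(1)_{k-r,\lambda}\,S_{r,\lambda}(n). \]
   Context: For $\lambda\in\mathbb{R}$ the degenerate falling factorials are $(x)_{0,\lambda}=1$ and $(x)_{m,\lambda}=x(x-\lambda)(x-2\lambda)\cdots(x-(m-1)\lambda)$ for $m\ge 1$. For positive integers $r,n$, $S_{r,\lambda}(n)=\sum_{j=1}^{n}(j)_{r,\lambda}=(1)_{r,\lambda}+(2)_{r,\lambda}+\cdots+(n)_{r,\lambda}$. *)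

(* Defs.v *)
From Stdlib Require Import Reals.
Open Scope R_scope.

Fixpoint dff (lam x : R) (m : nat) : R :=
  match m with
  | O => 1
  | S m' => dff lam x m' * (x - INR m' * lam)
  end.

(* sumR a b f = f a + f (a+1) + ... + f b  (0 if b < a) *)
Fixpoint sumR_aux (a : nat) (len : nat) (f : nat -> R) : R :=
  match len with
  | O => 0
  | S l => sumR_aux a l f + f (a + l)%nat
  end.
Definition sumR (a b : nat) (f : nat -> R) : R := sumR_aux a (S b - a) f.

Definition Sdeg (lam : R) (r n : nat) : R := sumR 1 n (fun j => dff lam (INR j) r).

(* Main.v *)
Require Import Defs.
From Stdlib Require Import Reals Lra Lia.
Open Scope R_scope.

Fixpoint sn (l : nat) (f : nat -> R) : R :=
  match l with O => 0 | S l => sn l f + f l end.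

Lemma sn_ext l f g : (forall i, (i < l)%nat -> f i = g i) -> sn l f = sn l g.
Proof. induction l; intros H; simpl; auto. rewrite IHl; [rewrite H|]; auto; intros; apply H; lia. Qed.

Lemma sn_plus l f g : sn l (fun i => f i + g i) = sn l f + sn l g.
Proof. induction l; simpl; [ring|rewrite IHl; ring]. Qed.

Lemma sn_scal l c f : sn l (fun i => c * f i) = c * sn l f.
Proof. induction l; simpl; [ring|rewrite IHl; ring]. Qed.

Lemma sn_shift l f : sn (S l) f = f O + sn l (fun i => f (S i)).
Proof. induction l; simpl in *; [ring|rewrite IHl; ring]. Qed.

Lemma sn_swap a b f : sn a (fun i => sn b (fun j => f i j)) = sn b (fun j => sn a (fun i => f i j)).
Proof. induction a; simpl.
- induction b; simpl; [ring|rewrite <- IHb; ring].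
- rewrite IHa, <- sn_plus. reflexivity. Qed.

Lemma sn_tele l F : sn l (fun i => F (S i) - F i) = F l - F O.
Proof. induction l; simpl; [ring|rewrite IHl; ring]. Qed.

Lemma sumR_aux_sn a l f : sumR_aux a l f = sn l (fun i => f (a + i)%nat).
Proof. induction l; simpl; auto. rewrite IHl; reflexivity. Qed.

Lemma sumR1 b f : sumR 1 b f = sn b (fun i => f (S i)).
Proof. unfold sumR. replace (S b - 1)%nat with b by lia. apply sumR_aux_sn. Qed.

Fixpoint bin (n k : nat) : R :=
  match n, k with
  | O, O => 1
  | O, S _ => 0
  | S _, O => 1
  | S n', S k' => bin n' k' + bin n' (S k')
  end.

Lemma bin_n0 n : bin n 0 = 1.
Proof. destruct n; reflexivity. Qed.

Lemma bin_gt n : forall k, (n < k)%nat -> bin n k = 0.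
Proof. induction n; intros k H; destruct k; try lia; simpl; auto.
rewrite !IHn; try lia; ring. Qed.

Lemma bin_nn n : bin n n = 1.
Proof. induction n; simpl; auto. rewrite IHn, bin_gt; [ring|lia]. Qed.

Lemma bin_Sn n : bin (S n) n = INR (S n).
Proof. induction n. simpl. reflexivity.
change (bin (S (S n)) (S n)) with (bin (S n) n + bin (S n) (S n)).
rewrite IHn, bin_nn, (S_INR (S n)). reflexivity. Qed.

Lemma bin_C n : forall k, (k <= n)%nat -> bin n k = Binomial.C n k.
Proof. induction n; intros k H.
- destruct k; [|lia]. unfold Binomial.C. simpl. field.
- destruct k. rewrite bin_n0. unfold Binomial.C. rewrite Nat.sub_0_r. change (Factorial.fact 0) with 1%nat. change (INR 1) with 1. field. apply INR_fact_neq_0.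
  simpl bin. destruct (Nat.eq_dec k n).
  + subst. rewrite bin_nn, bin_gt by lia. unfold Binomial.C. rewrite Nat.sub_diag. change (Factorial.fact 0) with 1%nat. change (INR 1) with 1. field. apply INR_fact_neq_0.
  + rewrite !IHn by lia. apply Binomial.pascal. lia.
Qed.

Lemma dffS lam x r : dff lam x (S r) = dff lam x r * (x - INR r * lam).
Proof. reflexivity. Qed.

Lemma BT lam m : forall x, dff lam (x + 1) m = sn (S m) (fun r => bin m r * dff lam x r * dff lam 1 (m - r)).
Proof.
induction m; intros x.
- simpl. ring.
- rewrite dffS, IHm, Rmult_comm, <- sn_scal.
  rewrite (sn_ext (S m) _ (fun r => bin m r * dff lam x (S r) * dff lam 1 (m - r) + bin m r * dff lam x r * dff lam 1 (S m - r))).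
  2:{ intros r Hr. replace (S m - r)%nat with (S (m - r)) by lia. rewrite !dffS, minus_INR by lia. ring. }
  rewrite sn_plus.
  rewrite (sn_shift (S m) (fun r => bin (S m) r * dff lam x r * dff lam 1 (S m - r))).
  rewrite (sn_ext (S m) (fun i => bin (S m) (S i) * dff lam x (S i) * dff lam 1 (S m - S i))
     (fun r => bin m r * dff lam x (S r) * dff lam 1 (m - r) + bin m (S r) * dff lam x (S r) * dff lam 1 (m - r))).
  2:{ intros r Hr. replace (S m - S r)%nat with (m - r)%nat by lia. simpl bin. ring. }
  rewrite sn_plus.
  rewrite (sn_shift m (fun r => bin m r * dff lam x r * dff lam 1 (S m - r))).
  change (sn (S m) (fun r => bin m (S r) * dff lam x (S r) * dff lam 1 (m - r)))
    with (sn m (fun r => bin m (S r) * dff lam x (S r) * dff lam 1 (m - r)) + bin m (S m) * dff lam x (S m) * dff lam 1 (m - m)).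
  rewrite (bin_gt m (S m)) by lia. rewrite !bin_n0.
  change (sn m (fun i => bin m (S i) * dff lam x (S i) * dff lam 1 (S m - S i)))
    with (sn m (fun i => bin m (S i) * dff lam x (S i) * dff lam 1 (m - i))).
  ring.
Qed.

Lemma key lam m x : x * dff lam (x+1) (S m) - (x-1) * dff lam x (S m) =
  (INR (S m) + 1) * dff lam x (S m)
  + sn m (fun i => dff lam 1 (S m + 1 - S i) * Binomial.C (S m) (S i - 1) * dff lam x (S i))
  + lam * sn m (fun i => INR (S i) * Binomial.C (S m) (S i) * dff lam 1 (S m - S i) * dff lam x (S i)).
Proof.
rewrite BT.
change (sn (S (S m)) (fun r => bin (S m) r * dff lam x r * dff lam 1 (S m - r)))
  with (sn (S m) (fun r => bin (S m) r * dff lam x r * dff lam 1 (S m - r))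
        + bin (S m) (S m) * dff lam x (S m) * dff lam 1 (S m - S m)).
rewrite bin_nn, Nat.sub_diag.
assert (Hx : x * sn (S m) (fun r => bin (S m) r * dff lam x r * dff lam 1 (S m - r)) =
  sn (S m) (fun r => bin (S m) r * dff lam 1 (S m - r) * dff lam x (S r))
  + lam * sn (S m) (fun r => INR r * bin (S m) r * dff lam 1 (S m - r) * dff lam x r)).
{ rewrite <- !sn_scal, <- sn_plus. apply sn_ext. intros. rewrite dffS. ring. }
replace (x * (sn (S m) (fun r => bin (S m) r * dff lam x r * dff lam 1 (S m - r)) +
   1 * dff lam x (S m) * dff lam 1 0)) with
  (x * sn (S m) (fun r => bin (S m) r * dff lam x r * dff lam 1 (S m - r)) + x * dff lam x (S m))
  by (change (dff lam 1 0) with 1; ring).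
rewrite Hx.
change (sn (S m) (fun r => bin (S m) r * dff lam 1 (S m - r) * dff lam x (S r)))
  with (sn m (fun r => bin (S m) r * dff lam 1 (S m - r) * dff lam x (S r))
        + bin (S m) m * dff lam 1 (S m - m) * dff lam x (S m)).
rewrite bin_Sn.
replace (dff lam 1 (S m - m)) with 1 by (replace (S m - m)%nat with 1%nat by lia; simpl; ring).
rewrite sn_shift. change (INR 0) with 0.
rewrite (sn_ext m (fun r => bin (S m) r * dff lam 1 (S m - r) * dff lam x (S r))
   (fun i => dff lam 1 (S m + 1 - S i) * Binomial.C (S m) (S i - 1) * dff lam x (S i))).
2:{ intros i Hi. rewrite bin_C by lia. replace (S m + 1 - S i)%nat with (S m - i)%nat by lia.
    replace (S i - 1)%nat with i by lia. ring. }
rewrite (sn_ext m (fun i => INR (S i) * bin (S m) (S i) * dff lam 1 (S m - S i) * dff lam x (S i))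
   (fun i => INR (S i) * Binomial.C (S m) (S i) * dff lam 1 (S m - S i) * dff lam x (S i))).
2:{ intros i Hi. rewrite bin_C by lia. ring. }
ring.
Qed.

Lemma swapS lam n m (c : nat -> R) :
  sn n (fun j => sn m (fun i => c i * dff lam (INR (S j)) (S i))) = sn m (fun i => c i * Sdeg lam (S i) n).
Proof. rewrite sn_swap. apply sn_ext; intros. rewrite sn_scal. unfold Sdeg; rewrite sumR1. reflexivity. Qed.

Theorem theorem3p2 (lam : R) (n k : nat) (hn : (1 <= n)%nat) (hk : (1 <= k)%nat) :
  Sdeg lam k n =
    INR n * dff lam (INR n + 1) k / (INR k + 1)
    - / (INR k + 1) * sumR 1 (k - 1)
        (fun r => dff lam 1 (k + 1 - r) * Binomial.C k (r - 1) * Sdeg lam r n)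
    - lam / (INR k + 1) * sumR 1 (k - 1)
        (fun r => INR r * Binomial.C k r * dff lam 1 (k - r) * Sdeg lam r n).
Proof.
destruct k as [|m]; [lia|].
rewrite !sumR1. replace (S m - 1)%nat with m by lia.
assert (HT : INR n * dff lam (INR n + 1) (S m) = (INR (S m) + 1) * Sdeg lam (S m) n
   + sn m (fun i => dff lam 1 (S m + 1 - S i) * Binomial.C (S m) (S i - 1) * Sdeg lam (S i) n)
   + lam * sn m (fun i => INR (S i) * Binomial.C (S m) (S i) * dff lam 1 (S m - S i) * Sdeg lam (S i) n)).
{ transitivity (sn n (fun j => INR (S j) * dff lam (INR (S j) + 1) (S m) - (INR (S j) - 1) * dff lam (INR (S j)) (S m))).
  - symmetry. transitivity (sn n (fun i => (fun i => INR i * dff lam (INR i + 1) (S m)) (S i) - (fun i => INR i * dff lam (INR i + 1) (S m)) i)).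
    + apply sn_ext. intros i _. rewrite (S_INR i). ring.
    + rewrite (sn_tele n (fun i => INR i * dff lam (INR i + 1) (S m))). change (INR 0) with 0. ring.
  - rewrite (sn_ext n _ (fun j => (INR (S m) + 1) * dff lam (INR (S j)) (S m)
       + sn m (fun i => (fun i => dff lam 1 (S m + 1 - S i) * Binomial.C (S m) (S i - 1)) i * dff lam (INR (S j)) (S i))
       + lam * sn m (fun i => (fun i => INR (S i) * Binomial.C (S m) (S i) * dff lam 1 (S m - S i)) i * dff lam (INR (S j)) (S i)))).
    2:{ intros j _. apply key. }
    rewrite !sn_plus, !sn_scal, !swapS. replace (Sdeg lam (S m) n) with (sn n (fun i => dff lam (INR (S i)) (S m))) by (unfold Sdeg; rewrite sumR1; reflexivity). reflexivity. }
rewrite HT. field.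
pose proof (pos_INR (S m)). lra.
Qed.
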